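(* Let $f_0,f_1$ be finitely supported probability distributions on a connected, locally finite graph $G$. Let $\gamma^{(1)},\gamma^{(2)}$ be geodesics in $G$ such that $(e_0(\gamma^{(i)}),e_1(\gamma^{(i)}))\in\mathcal{C}(f_0,f_1)$ for $i=1,2$. Then there are no integers $k_1,k_2$ with $0\le k_i\le L(\gamma^{(i)})-1$ such that both $\gamma^{(1)}(k_1)=\gamma^{(2)}(k_2+1)$ and $\gamma^{(1)}(k_1+1)=\gamma^{(2)}(k_2)$.
   Context: $d$ is the graph distance of $G$. A path of length $n$ is a sequence of vertices $\gamma(0),\dots,\gamma(n)$ with $\gamma(i),\gamma(i+1)$ adjacent; $L(\gamma)=n$, $e_0(\gamma)=\gamma(0)$, $e_1(\gamma)=\gamma(n)$; it is a geodesic if $n=d(\gamma(0),\gamma(n))$. A probability distribution is a function $f:G\to[0,\infty)$ with $\sum_x f(x)=1$. $\Pi(f_0,f_1)$ is the set of couplings ($\pi:G\times G\to[0,\infty)$ with marginals $f_0,f_1$), $\Pi_1(f_0,f_1)$ the set of couplings minimizing $\sum_{x,y}d(x,y)\pi(x,y)$, and $\mathcal{C}(f_0,f_1)=\{(x,y)\in G\times G:\pi(x,y)>0\text{ for some }\pi\in\Pi_1(f_0,f_1)\}$. *)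

(* Defs.v *)
From HB Require Import structures.
From mathcomp Require Import all_boot all_order all_algebra.
From mathcomp Require Import all_classical all_reals.
From mathcomp Require Import ereal esum.
Set Implicit Arguments. Unset Strict Implicit. Unset Printing Implicit Defensive.
Import Order.TTheory GRing.Theory Num.Theory.
Local Open Scope classical_set_scope.
Local Open Scope ring_scope.

Section Graph.
Variables (V : choiceType) (adj : rel V).

(* A path of length n = size p is the vertex sequence x :: p,
   gamma(k) = nth x (x :: p) k, e_0 = x, e_1 = last x p. *)
Definition walk (x : V) (p : seq V) : Prop := path adj x p.

Definition connected_graph : Prop :=
  forall x y : V, exists p, path adj x p /\ last x p = y.

Definition locally_finite : Prop :=
  forall x : V, finite_set [set y | adj x y].

Definition walk_of_len (x y : V) (n : nat) : bool :=
  `[< exists p, [/\ path adj x p, last x p = y & size p = n] >].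

(* Graph distance: length of a shortest path (0 if none exists). *)
Definition gdist (x y : V) : nat :=
  match pselect (exists n, walk_of_len x y n) with
  | left h => ex_minn h
  | right _ => 0%N
  end.

Definition geodesic (x : V) (p : seq V) : Prop :=
  path adj x p /\ size p = gdist x (last x p).

Variable R : realType.

Definition fin_prob_distr (f : V -> R) : Prop :=
  [/\ forall x, 0 <= f x,
      finite_set [set x | f x != 0] &
      (\esum_(x in [set: V]) (f x)%:E = 1)%E].

Definition coupling (f0 f1 : V -> R) (pi : V -> V -> R) : Prop :=
  [/\ forall x y, 0 <= pi x y,
      (forall x, \esum_(y in [set: V]) (pi x y)%:E = (f0 x)%:E) &
      (forall y, \esum_(x in [set: V]) (pi x y)%:E = (f1 y)%:E)].

Definition transport_cost (pi : V -> V -> R) : \bar R :=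
  \esum_(z in [set: V * V]) ((gdist z.1 z.2)%:R * pi z.1 z.2)%:E.

Definition optimal_coupling (f0 f1 : V -> R) (pi : V -> V -> R) : Prop :=
  coupling f0 f1 pi /\
  forall pi', coupling f0 f1 pi' -> (transport_cost pi <= transport_cost pi')%E.

Definition opt_support (f0 f1 : V -> R) : set (V * V) :=
  [set z | exists pi, optimal_coupling f0 f1 pi /\ 0 < pi z.1 z.2].

End Graph.

(* Main.v *)
Require Import Defs.
From HB Require Import structures.
From mathcomp Require Import all_boot all_order all_algebra.
From mathcomp Require Import all_classical all_reals.
From mathcomp Require Import ereal esum.
From mathcomp Require Import ring lra zify.
Import Order.TTheory GRing.Theory Num.Theory.
Local Open Scope classical_set_scope.
Local Open Scope ring_scope.

Section Helpers.
Variable R : realType.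

Lemma esum_single (T : choiceType) (h : T -> \bar R) t :
  (0 <= h t)%E -> (forall i, i != t -> h i = 0%E) -> \esum_(i in [set: T]) h i = h t.
Proof.
move=> h0 hz; rewrite -(esum_set1 h0) [RHS]esum_mkcond; apply: eq_esum => i _.
case: ifPn => //; rewrite in_set1 => /hz ->//.
Qed.

Lemma esum_ge1 (T : choiceType) (h : T -> \bar R) t :
  (forall i, 0 <= h i)%E -> (h t <= \esum_(i in [set: T]) h i)%E.
Proof.
move=> h0; apply: esum_ge; exists [set t]; first by split; [exact: finite_set1|].
by rewrite fsbig_set1.
Qed.

Lemma esum_finsupp (T : choiceType) (h : T -> R) (F : set T) :
  finite_set F -> (forall i, 0 <= h i) -> (forall i, ~ F i -> h i = 0) ->
  \esum_(i in [set: T]) (h i)%:E \is a fin_num.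
Proof.
move=> fF h0 hz.
have -> : \esum_(i in [set: T]) (h i)%:E = \esum_(i in F) (h i)%:E.
  rewrite [RHS]esum_mkcond; apply: eq_esum => i _; case: ifPn => //.
  by rewrite notin_setE => /hz ->.
rewrite esum_fset//; last by move=> i _; rewrite lee_fin.
by rewrite fsumEFin.
Qed.

Lemma esum_comb (T : choiceType) (u g1 g2 w1 w2 h1 h2 : T -> R) :
  (forall t, 0 <= u t) -> (forall t, 0 <= g1 t) -> (forall t, 0 <= g2 t) ->
  (forall t, 0 <= w1 t) -> (forall t, 0 <= w2 t) ->
  (forall t, 0 <= h1 t) -> (forall t, 0 <= h2 t) ->
  (forall t, u t + u t + g1 t + g2 t = w1 t + w2 t + h1 t + h2 t) ->
  (\esum_(t in [set: T]) (u t)%:E + \esum_(t in [set: T]) (u t)%:E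
    + \esum_(t in [set: T]) (g1 t)%:E + \esum_(t in [set: T]) (g2 t)%:E
  = \esum_(t in [set: T]) (w1 t)%:E + \esum_(t in [set: T]) (w2 t)%:E
    + \esum_(t in [set: T]) (h1 t)%:E + \esum_(t in [set: T]) (h2 t)%:E)%E.
Proof.
move=> u0 g10 g20 w10 w20 h10 h20 e.
have P (f : T -> R) : (forall t, 0 <= f t) -> forall t, [set: T] t -> (0 <= (f t)%:E)%E.
  by move=> f0 t _; rewrite lee_fin.
rewrite -(esumD (P _ u0) (P _ u0)) -(esumD _ (P _ g10)); last first.
  by move=> t _; rewrite -EFinD lee_fin addr_ge0.
rewrite -(esumD _ (P _ g20)); last first.
  by move=> t _; rewrite -!EFinD lee_fin !addr_ge0.
rewrite -(esumD (P _ w10) (P _ w20)) -(esumD _ (P _ h10)); last first.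
  by move=> t _; rewrite -EFinD lee_fin addr_ge0.
rewrite -(esumD _ (P _ h20)); last first.
  by move=> t _; rewrite -!EFinD lee_fin !addr_ge0.
by apply: eq_esum => t _; rewrite -!EFinD e.
Qed.

Lemma esum_ind (T : choiceType) (F : T -> R) t : 0 <= F t ->
  \esum_(z in [set: T]) (F z * (z == t)%:R)%:E = (F t)%:E.
Proof.
move=> F0; rewrite (@esum_single _ (fun z => (F z * (z == t)%:R)%:E) t).
- by rewrite eqxx mulr1.
- by rewrite eqxx mulr1 lee_fin.
- by move=> i /negbTE ->; rewrite mulr0.
Qed.

Lemma indE (T1 T2 : eqType) (x xi : T1) (y yj : T2) :
  (x == xi)%:R * (y == yj)%:R = ((x, y) == (xi, yj))%:R :> R.
Proof.
by rewrite xpair_eqE; case: (x == xi); case: (y == yj);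
  rewrite ?mulr1 ?mulr0 ?mul0r ?mul1r.
Qed.

Lemma ecancel (S : \bar R) (a b a' b' c : R) : (0 <= S)%E ->
  a + b = a' + b' ->
  (S + S + a%:E + b%:E = c%:E + c%:E + a'%:E + b'%:E)%E -> S = c%:E.
Proof.
case: S => [r||] //= _ hab; rewrite -!EFinD.
by move=> [] h; congr (_%:E); lra.
Qed.

End Helpers.

Section Transport.
Variables (R : realType) (V : choiceType) (adj : rel V).

Lemma coupling_le (f0 f1 : V -> R) pi : coupling f0 f1 pi ->
  forall x y, pi x y <= f0 x /\ pi x y <= f1 y.
Proof.
move=> [p0 m0 m1] x y; split.
  rewrite -lee_fin -m0; apply: esum_ge1.
  by move=> i; rewrite lee_fin.
rewrite -lee_fin -m1; apply: esum_ge1.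
by move=> i; rewrite lee_fin.
Qed.

Lemma cost_fin (f0 f1 : V -> R) pi : fin_prob_distr f0 -> fin_prob_distr f1 ->
  coupling f0 f1 pi -> transport_cost adj pi \is a fin_num.
Proof.
move=> [_ fin0 _] [_ fin1 _] cp; have [p0 _ _] := cp.
apply: (@esum_finsupp R _ (fun z => (gdist adj z.1 z.2)%:R * pi z.1 z.2)
  ([set x | f0 x != 0] `*` [set y | f1 y != 0])).
- exact: finite_setX.
- by move=> z; rewrite mulr_ge0.
- move=> [x y] /= hn; have [h0 h1] := coupling_le _ _ _ cp x y.
  suff -> : pi x y = 0 by rewrite mulr0.
  apply/eqP; rewrite eq_le p0 andbT.
  case: (boolP (f0 x != 0)) => [nz0|]; last by rewrite negbK => /eqP <-.
  case: (boolP (f1 y != 0)) => [nz1|]; last by rewrite negbK => /eqP <-.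
  by exfalso; apply: hn.
Qed.

Lemma no_improve (f0 f1 : V -> R) (hf0 : fin_prob_distr f0)
  (hf1 : fin_prob_distr f1) x1 y1 x2 y2 :
  opt_support adj f0 f1 (x1, y1) -> opt_support adj f0 f1 (x2, y2) ->
  (gdist adj x1 y2 + gdist adj x2 y1 < gdist adj x1 y1 + gdist adj x2 y2)%N ->
  False.
Proof.
move=> [p1 [[cp1 opt1] /= a0]] [p2 [[cp2 opt2] /= b0]] hlt.
have [p10 m10 m11] := cp1; have [p20 m20 m21] := cp2.
pose e := Num.min (p1 x1 y1) (p2 x2 y2).
have e0 : 0 < e by rewrite lt_min a0 b0.
have e1 : e <= p1 x1 y1 by rewrite ge_min lexx.
have e2 : e <= p2 x2 y2 by rewrite ge_min lexx orbT.
pose ind (x y xi yj : V) : R := (x == xi)%:R * (y == yj)%:R.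
have ind0 (x y xi yj : V) : 0 <= ind x y xi yj by rewrite mulr_ge0.
have ind1 (x y : V) : e * ind x y x1 y1 <= p1 x y.
  rewrite /ind; case: eqP => [->|_]; case: eqP => [->|_];
    by rewrite ?mulr1 ?mulr0 ?mul0r.
have ind2 (x y : V) : e * ind x y x2 y2 <= p2 x y.
  rewrite /ind; case: eqP => [->|_]; case: eqP => [->|_];
    by rewrite ?mulr1 ?mulr0 ?mul0r.
pose q (x y : V) := (p1 x y + p2 x y) / 2 + e / 2 *
  (ind x y x1 y2 + ind x y x2 y1 - ind x y x1 y1 - ind x y x2 y2).
have H (x y : V) : q x y + q x y + e * ind x y x1 y1 + e * ind x y x2 y2 =
    p1 x y + p2 x y + e * ind x y x1 y2 + e * ind x y x2 y1.
  by rewrite /q; field.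
have q0 (x y : V) : 0 <= q x y.
  have := H x y; have := ind1 x y; have := ind2 x y.
  have := mulr_ge0 (ltW e0) (ind0 x y x1 y2).
  have := mulr_ge0 (ltW e0) (ind0 x y x2 y1).
  move: (e * _) (e * _) (e * _) (e * _) => A B C D; lra.
have nn (A B : R) : 0 <= A -> 0 <= B -> 0 <= A * B by apply: mulr_ge0.
have rowI (xi yj x : V) : \esum_(y in [set: V]) (e * ind x y xi yj)%:E
    = (e * (x == xi)%:R)%:E.
  rewrite (eq_esum (b := fun y => ((e * (x == xi)%:R) * (y == yj)%:R)%:E)).
    by apply: esum_ind; rewrite nn // ltW.
  by move=> y _; rewrite /ind mulrA.
have colI (xi yj y : V) : \esum_(x in [set: V]) (e * ind x y xi yj)%:E
    = (e * (y == yj)%:R)%:E.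
  rewrite (eq_esum (b := fun x => ((e * (y == yj)%:R) * (x == xi)%:R)%:E)).
    by apply: esum_ind; rewrite nn // ltW.
  by move=> x _; rewrite /ind mulrA mulrAC.
have eind (x y xi yj : V) : 0 <= e * ind x y xi yj by rewrite nn // ltW.
have cq : coupling f0 f1 q.
  split => //.
  - move=> x.
    have E := @esum_comb R V (fun y => q x y) (fun y => e * ind x y x1 y1)
      (fun y => e * ind x y x2 y2) (fun y => p1 x y) (fun y => p2 x y)
      (fun y => e * ind x y x1 y2) (fun y => e * ind x y x2 y1)
      (q0 x) (fun y => eind x y x1 y1) (fun y => eind x y x2 y2) (p10 x) (p20 x)
      (fun y => eind x y x1 y2) (fun y => eind x y x2 y1) (H x).
    rewrite m10 m20 !rowI in E.
    apply: (@ecancel R _ _ _ _ _ _ _ _ E) => //.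
    by apply: esum_ge0 => y _; rewrite lee_fin.
  - move=> y.
    have E := @esum_comb R V (fun x => q x y) (fun x => e * ind x y x1 y1)
      (fun x => e * ind x y x2 y2) (fun x => p1 x y) (fun x => p2 x y)
      (fun x => e * ind x y x1 y2) (fun x => e * ind x y x2 y1)
      (fun x => q0 x y) (fun x => eind x y x1 y1) (fun x => eind x y x2 y2) (fun x => p10 x y) (fun x => p20 x y)
      (fun x => eind x y x1 y2) (fun x => eind x y x2 y1) (fun x => H x y).
    rewrite m11 m21 !colI in E.
    apply: (@ecancel R _ _ _ _ _ _ _ _ E); last by rewrite addrC.
    by apply: esum_ge0 => x _; rewrite lee_fin.
pose d (z : V * V) : R := (gdist adj z.1 z.2)%:R.
have d0 z : 0 <= d z by [].
have costI (xi yj : V) :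
    \esum_(z in [set: V * V]) (d z * (e * ind z.1 z.2 xi yj))%:E
    = (d (xi, yj) * e)%:E.
  rewrite (eq_esum (b := fun z => ((d z * e) * (z == (xi, yj))%:R)%:E)).
    by apply: (@esum_ind R _ (fun z => d z * e) (xi, yj)); rewrite nn // ltW.
  by move=> [a b] _; rewrite /ind /= indE mulrA.
have Hd (z : V * V) : d z * q z.1 z.2 + d z * q z.1 z.2 +
    d z * (e * ind z.1 z.2 x1 y1) + d z * (e * ind z.1 z.2 x2 y2) =
    d z * p1 z.1 z.2 + d z * p2 z.1 z.2 +
    d z * (e * ind z.1 z.2 x1 y2) + d z * (e * ind z.1 z.2 x2 y1).
  by rewrite -!mulrDr H.
have E := @esum_comb R (V * V)%type (fun z => d z * q z.1 z.2)
  (fun z => d z * (e * ind z.1 z.2 x1 y1)) (fun z => d z * (e * ind z.1 z.2 x2 y2))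
  (fun z => d z * p1 z.1 z.2) (fun z => d z * p2 z.1 z.2)
  (fun z => d z * (e * ind z.1 z.2 x1 y2)) (fun z => d z * (e * ind z.1 z.2 x2 y1))
  (fun z => nn _ _ (d0 z) (q0 _ _)) (fun z => nn _ _ (d0 z) (eind _ _ _ _))
  (fun z => nn _ _ (d0 z) (eind _ _ _ _)) (fun z => nn _ _ (d0 z) (p10 _ _))
  (fun z => nn _ _ (d0 z) (p20 _ _)) (fun z => nn _ _ (d0 z) (eind _ _ _ _))
  (fun z => nn _ _ (d0 z) (eind _ _ _ _))
  Hd.
rewrite !costI in E.
have c1f := cost_fin _ _ _ hf0 hf1 cp1.
have o12 := opt1 p2 cp2; have o21 := opt2 p1 cp1; have o1q := opt1 q cq.
change (transport_cost adj q + transport_cost adj q + (d (x1, y1) * e)%:E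
  + (d (x2, y2) * e)%:E = transport_cost adj p1 + transport_cost adj p2
  + (d (x1, y2) * e)%:E + (d (x2, y1) * e)%:E)%E in E.
have hd : d (x1, y2) * e + d (x2, y1) * e < d (x1, y1) * e + d (x2, y2) * e.
  rewrite -!mulrDl ltr_pM2r // /d /= -!natrD ltr_nat //.
move: E o12 o21 o1q c1f hd.
move: (transport_cost adj q) (transport_cost adj p1) (transport_cost adj p2)
  => C c1 c2.
move: (d (x1, y2) * e) (d (x2, y1) * e) (d (x1, y1) * e) (d (x2, y2) * e)
  => A B C' D.
case: c1 => [r1||] //; case: c2 => [r2||] //; case: C => [s||] //=.
rewrite -!EFinD !lee_fin => -[] *; lra.
Qed.

End Transport.

Section Geo.
Variables (V : choiceType) (adj : rel V).

Lemma last_take_nth (x : V) p k : (k <= size p)%N ->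
  last x (take k p) = nth x (x :: p) k.
Proof.
elim: p x k => [|y p IH] x [|k] //= hk.
by rewrite IH // (set_nth_default y).
Qed.

Lemma gdist_le (x : V) p : path adj x p -> (gdist adj x (last x p) <= size p)%N.
Proof.
move=> hp; rewrite /gdist; case: pselect => [h|[]]; last first.
  by exists (size p); apply/asboolP; exists p.
case: ex_minnP => m _; apply; apply/asboolP; by exists p.
Qed.

Lemma cross (x x' : V) p p' k k' : path adj x p -> path adj x' p' ->
  (k <= size p)%N -> (k'.+1 <= size p')%N ->
  nth x (x :: p) k = nth x' (x' :: p') k'.+1 ->
  (gdist adj x (last x' p') <= k + (size p' - k'.+1))%N.
Proof.
move=> hp hp' hk hk' e.
have hl : last x (take k p) = last x' (take k'.+1 p') by rewrite !last_take_nth.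
have hd : path adj (last x' (take k'.+1 p')) (drop k'.+1 p').
  by move: hp'; rewrite -{1}(cat_take_drop k'.+1 p') cat_path => /andP[_].
have -> : last x' p' = last x (take k p ++ drop k'.+1 p').
  by rewrite last_cat hl -last_cat cat_take_drop.
have -> : (k + (size p' - k'.+1) = size (take k p ++ drop k'.+1 p'))%N.
  by rewrite size_cat size_takel // size_drop.
apply: gdist_le; rewrite cat_path take_path //= hl //.
Qed.

End Geo.

Theorem theorem2p11 (R : realType) (V : choiceType) (adj : rel V)
  (adj_sym : symmetric adj) (adj_irr : irreflexive adj)
  (Gconn : connected_graph adj) (Glf : locally_finite adj)
  (f0 f1 : V -> R)
  (hf0 : fin_prob_distr f0) (hf1 : fin_prob_distr f1)
  (x1 : V) (p1 : seq V) (x2 : V) (p2 : seq V)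
  (geo1 : geodesic adj x1 p1) (geo2 : geodesic adj x2 p2)
  (C1 : opt_support adj f0 f1 (x1, last x1 p1))
  (C2 : opt_support adj f0 f1 (x2, last x2 p2)) :
  ~ exists k1 k2 : nat,
      [/\ (k1 < size p1)%N, (k2 < size p2)%N,
          nth x1 (x1 :: p1) k1 = nth x2 (x2 :: p2) k2.+1 &
          nth x1 (x1 :: p1) k1.+1 = nth x2 (x2 :: p2) k2].
Proof.
move=> [k1 [k2 [hk1 hk2 ea eb]]].
apply: (@no_improve R V adj f0 f1 hf0 hf1 _ _ _ _ C1 C2).
have [g1p g1s] := geo1; have [g2p g2s] := geo2.
have h12 := @cross V adj _ _ _ _ _ _ g1p g2p (ltnW hk1) hk2 ea.
have h21 := @cross V adj _ _ _ _ _ _ g2p g1p (ltnW hk2) hk1 (esym eb).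
rewrite -g1s -g2s.
have := leq_add h12 h21.
move: hk1 hk2; move: (size p1) (size p2) (gdist adj x1 (last x2 p2))
  (gdist adj x2 (last x1 p1)) => s1 s2 a b.
move=> hk1 hk2 h; apply: (leq_ltn_trans h).
lia.
Qed.
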